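(* Let $l\ge0$, $k,m\in\{-l,\dots,l\}$ be integers, $s\in\mathbb{C}$ with $\mathrm{Re}(s)>1$ and $P\in\mathbb{H}^3$. Then \[H^l_{km}(P,s)=e^{-i(k+m)\pi}\,E^l_{km}(P,s).\]
   Context: $\Gamma=\mathbf{SL}(2,\mathcal{O}_D)$ ($\mathcal{O}_D$ ring of integers of $\mathbb{Q}(\sqrt{-D})$), $\Gamma_\infty$ its upper triangular subgroup, $\Gamma'_\infty=\{\begin{pmatrix}1&w\\0&1\end{pmatrix}:w\in\mathcal{O}_D\}$. $\mathbf{SL}(2,\mathbb{C})$ acts on $\mathbb{H}^3=\{z+\lambda j\}\subset\mathbb{R}^3$ by Möbius transformations, $\mathrm{Im}(z+\lambda j)=\lambda$. $D^l_{km}(R)$ ($R\in\mathbf{SO}(3)$) is the Wigner matrix, defined by $Y^l_m(R^{-1}p)=\sum_kD^l_{km}(R)Y^l_k(p)$, $Y^l_k$ the standard spherical harmonics. $T(g)$ is the $\mathbf{SU}(2)$-factor of the Iwasawa decomposition $g=n[w]a[\mu]K$ ($n[w]=\begin{pmatrix}1&w\\0&1\end{pmatrix}$, $a[\mu]=\mathrm{diag}(\sqrt\mu,1/\sqrt\mu)$); $\Phi:\mathbf{SU}(2)\to\mathbf{SO}(3)$ the spin double cover. For $P=z+\lambda j$: $E^l_{km}(P,s):=\frac{1}{[\Gamma_\infty:\Gamma'_\infty]}\sum_{\sigma\in\Gamma'_\infty\backslash\Gamma}\overline{D^l_{km}(\Phi_{T(\sigma n[z]a[\lambda])^{-1}})}(\mathrm{Im}\,\sigma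 P)^{1+s}$ and $H^l_{km}(P,s):=\frac{1}{[\Gamma_\infty:\Gamma'_\infty]}\sum_{\sigma\in\Gamma'_\infty\backslash\Gamma}\overline{D^l_{km}(R(d\sigma,P)^{-1})}(\mathrm{Im}\,\sigma P)^{1+s}$, where $R(d\sigma,P)\in\mathbf{SO}(3)$ is the linear map $v\mapsto\frac{\lambda}{\mathrm{Im}\,\sigma P}d\sigma_P(v)$ ($d\sigma_P$ the Euclidean differential of $\sigma$ at $P$). *)

(* Defs.v *)
From Stdlib Require Import Reals ZArith List ClassicalEpsilon.
Open Scope R_scope.

Definition Cx := (R * R)%type.
Definition RtoC (x : R) : Cx := (x, 0).
Definition C0 : Cx := (0, 0).
Definition C1 : Cx := (1, 0).
Definition Cadd (z w : Cx) : Cx := (fst z + fst w, snd z + snd w).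
Definition Copp (z : Cx) : Cx := (- fst z, - snd z).
Definition Csub (z w : Cx) : Cx := Cadd z (Copp w).
Definition Cmul (z w : Cx) : Cx :=
  (fst z * fst w - snd z * snd w, fst z * snd w + snd z * fst w).
Definition Cscale (r : R) (z : Cx) : Cx := (r * fst z, r * snd z).
Definition Cconj (z : Cx) : Cx := (fst z, - snd z).
Definition Cnorm2 (z : Cx) : R := fst z ^ 2 + snd z ^ 2.
Definition Cnorm (z : Cx) : R := sqrt (Cnorm2 z).
Definition Cinv (z : Cx) : Cx := (fst z / Cnorm2 z, - snd z / Cnorm2 z).
Definition Cdiv (z w : Cx) : Cx := Cmul z (Cinv w).
Definition Cexpi (t : R) : Cx := (cos t, sin t).
Fixpoint Cpow (z : Cx) (n : nat) : Cx :=
  match n with O => C1 | S n => Cmul z (Cpow z n) end.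
(* x^s = exp(s ln x) for real x > 0 and complex s *)
Definition Cpow_pos (x : R) (s : Cx) : Cx :=
  Cscale (exp (fst s * ln x)) (Cexpi (snd s * ln x)).
Fixpoint Csum_n (f : nat -> Cx) (n : nat) : Cx :=
  match n with O => C0 | S n => Cadd (Csum_n f n) (f n) end.
Definition Csum_list (l : list Cx) : Cx := fold_right Cadd C0 l.

(* Unconditional (= absolute, in finite dimension) summability of a family
   indexed by an arbitrary type: the net of finite partial sums converges. *)
Definition HasSum {I : Type} (f : I -> Cx) (S : Cx) : Prop :=
  forall eps, 0 < eps ->
    exists F0 : list I, forall F : list I, NoDup F -> incl F0 F ->
      Cnorm (Csub (Csum_list (map f F)) S) < eps.

Definition squarefree (D : Z) : Prop :=
  forall p : Z, (p * p | D)%Z -> p = 1%Z \/ p = (-1)%Z.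
(* Z-basis {1, omega_D} of O_D *)
Definition omegaD (D : Z) : Cx :=
  if Z.eqb (Z.modulo D 4) 3 then (1 / 2, sqrt (IZR D) / 2)
  else (0, sqrt (IZR D)).
Definition inOD (D : Z) (z : Cx) : Prop :=
  exists a b : Z, z = Cadd (RtoC (IZR a)) (Cscale (IZR b) (omegaD D)).

Record M2 := mkM2 { ma : Cx; mb : Cx; mc : Cx; md : Cx }.
Definition M2id : M2 := mkM2 C1 C0 C0 C1.
Definition M2mul (g h : M2) : M2 :=
  mkM2 (Cadd (Cmul (ma g) (ma h)) (Cmul (mb g) (mc h)))
       (Cadd (Cmul (ma g) (mb h)) (Cmul (mb g) (md h)))
       (Cadd (Cmul (mc g) (ma h)) (Cmul (md g) (mc h)))
       (Cadd (Cmul (mc g) (mb h)) (Cmul (md g) (md h))).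
Definition M2det (g : M2) : Cx := Csub (Cmul (ma g) (md g)) (Cmul (mb g) (mc g)).
Definition M2inv (g : M2) : M2 :=
  let dt := M2det g in
  mkM2 (Cdiv (md g) dt) (Cdiv (Copp (mb g)) dt)
       (Cdiv (Copp (mc g)) dt) (Cdiv (ma g) dt).
Definition M2adj (g : M2) : M2 :=
  mkM2 (Cconj (ma g)) (Cconj (mc g)) (Cconj (mb g)) (Cconj (md g)).
Definition inSL2C (g : M2) : Prop := M2det g = C1.
Definition inSU2 (K : M2) : Prop := inSL2C K /\ M2mul K (M2adj K) = M2id.
Definition inGamma (D : Z) (g : M2) : Prop :=
  inSL2C g /\ inOD D (ma g) /\ inOD D (mb g) /\ inOD D (mc g) /\ inOD D (md g).
Definition nmat (w : Cx) : M2 := mkM2 C1 w C0 C1.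
Definition amat (mu : R) : M2 := mkM2 (RtoC (sqrt mu)) C0 C0 (RtoC (/ sqrt mu)).

Definition IsIwasawaK (g K : M2) : Prop :=
  inSU2 K /\ exists (w : Cx) (mu : R), 0 < mu /\ g = M2mul (nmat w) (M2mul (amat mu) K).
Definition Tk (g : M2) : M2 := epsilon (inhabits M2id) (IsIwasawaK g).

Record H3 := mkH3 { hz : Cx; hl : R }.   (* the point z + lambda j *)
Definition mob (g : M2) (P : H3) : H3 :=
  let z := hz P in let l := hl P in
  let czd := Cadd (Cmul (mc g) z) (md g) in
  let den := Cnorm2 czd + Cnorm2 (mc g) * l ^ 2 in
  mkH3 (Cscale (/ den)
          (Cadd (Cmul (Cadd (Cmul (ma g) z) (mb g)) (Cconj czd))
                (Cscale (l ^ 2) (Cmul (ma g) (Cconj (mc g))))))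
       (l / den).

Inductive i3 := X1 | X2 | X3.
Definition i3_eqb (i j : i3) : bool :=
  match i, j with X1, X1 | X2, X2 | X3, X3 => true | _, _ => false end.
Definition R3 := i3 -> R.
Definition M3 := i3 -> i3 -> R.
Definition M3zero : M3 := fun _ _ => 0.
Definition delta (i j : i3) : R := if i3_eqb i j then 1 else 0.
Definition M3mulv (A : M3) (v : R3) : R3 :=
  fun i => A i X1 * v X1 + A i X2 * v X2 + A i X3 * v X3.
Definition M3mul (A B : M3) : M3 :=
  fun i j => A i X1 * B X1 j + A i X2 * B X2 j + A i X3 * B X3 j.
Definition nx (i : i3) : i3 := match i with X1 => X2 | X2 => X3 | X3 => X1 end.
Definition M3cof (A : M3) (i j : i3) : R :=
  A (nx i) (nx j) * A (nx (nx i)) (nx (nx j))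
  - A (nx i) (nx (nx j)) * A (nx (nx i)) (nx j).
Definition M3det (A : M3) : R :=
  A X1 X1 * M3cof A X1 X1 + A X1 X2 * M3cof A X1 X2 + A X1 X3 * M3cof A X1 X3.
Definition M3inv (A : M3) : M3 := fun i j => M3cof A j i / M3det A.
Definition isSO3 (A : M3) : Prop :=
  (forall i j, M3mul (fun a b => A b a) A i j = delta i j) /\ M3det A = 1.
Definition unitR3 (p : R3) : Prop := p X1 ^ 2 + p X2 ^ 2 + p X3 ^ 2 = 1.

Definition toR3 (P : H3) : R3 :=
  fun i => match i with X1 => fst (hz P) | X2 => snd (hz P) | X3 => hl P end.
Definition ofR3 (v : R3) : H3 := mkH3 (v X1, v X2) (v X3).
Definition mobR3 (g : M2) (v : R3) : R3 := toR3 (mob g (ofR3 v)).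

Definition IsJac (F : R3 -> R3) (v : R3) (L : M3) : Prop :=
  forall i j, derivable_pt_lim (fun t => F (fun q => v q + t * delta j q) i) 0 (L i j).
Definition jac (F : R3 -> R3) (v : R3) : M3 := epsilon (inhabits M3zero) (IsJac F v).

Definition Rdsig (sigma : M2) (P : H3) : M3 :=
  fun i j => (hl P / hl (mob sigma P)) * jac (mobR3 sigma) (toR3 P) i j.

(* R^3 is identified with traceless Hermitian matrices via              *)
(*   Xh(v) = [[-v3, v1 + i v2], [v1 - i v2, v3]],                        *)
Definition Xh (v : R3) : M2 :=
  mkM2 (RtoC (- v X3)) (v X1, v X2) (v X1, - v X2) (RtoC (v X3)).
Definition Xh_inv (Y : M2) : R3 :=
  fun i => match i with X1 => fst (mb Y) | X2 => snd (mb Y) | X3 => fst (md Y) end.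
Definition Phi (K : M2) : M3 :=
  fun i j => Xh_inv (M2mul K (M2mul (Xh (fun q => delta j q)) (M2adj K))) i.

(* Standard spherical harmonics Y^l_m (Condon-Shortley phase) on S^2     *)
(* d^{l+m}/dt^{l+m} (t^2 - 1)^l *)
Definition dLeg (l m : nat) (t : R) : R :=
  sum_f_R0 (fun j =>
    if (l + m <=? 2 * j)%nat then
      INR (fact l) / (INR (fact j) * INR (fact (l - j))) * (-1) ^ (l - j)
      * (INR (fact (2 * j)) / INR (fact (2 * j - (l + m)))) * t ^ (2 * j - (l + m))
    else 0) l.
Definition Nlm (l m : nat) : R :=
  sqrt ((2 * INR l + 1) / (4 * PI) * (INR (fact (l - m)) / INR (fact (l + m)))).
Definition Ypos (l m : nat) (p : R3) : Cx :=
  Cscale ((-1) ^ m * Nlm l m / (2 ^ l * INR (fact l)) * dLeg l m (p X3))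
         (Cpow (p X1, p X2) m).
Definition Ylm (l : nat) (m : Z) (p : R3) : Cx :=
  if (0 <=? m)%Z then Ypos l (Z.to_nat m) p
  else Cscale ((-1) ^ Z.to_nat (- m)) (Cconj (Ypos l (Z.to_nat (- m)) p)).

Definition IsWigner (l : nat) (Dw : M3 -> Z -> Z -> Cx) : Prop :=
  forall A : M3, isSO3 A -> forall m : Z, (- Z.of_nat l <= m <= Z.of_nat l)%Z ->
  forall p : R3, unitR3 p ->
    Ylm l m (M3mulv (M3inv A) p)
    = Csum_n (fun i => Cmul (Dw A (Z.of_nat i - Z.of_nat l)%Z m)
                            (Ylm l (Z.of_nat i - Z.of_nat l)%Z p))
             (2 * l + 1).

Definition cosetOf (D : Z) (sigma : M2) : M2 -> Prop :=
  fun tau => exists w, inOD D w /\ tau = M2mul (nmat w) sigma.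
Definition Coset (D : Z) : Type :=
  { S : M2 -> Prop | exists sigma, inGamma D sigma /\ S = cosetOf D sigma }.
Definition rep {D : Z} (S : Coset D) : M2 := epsilon (inhabits M2id) (proj1_sig S).

(* N = [Gamma_infty : Gamma'_infty], Gamma_infty = upper triangular part of Gamma *)
Definition IsIndexInf (D : Z) (N : nat) : Prop :=
  exists reps : list M2, length reps = N /\
    (forall r, In r reps -> inGamma D r /\ mc r = C0) /\
    (forall g, inGamma D g -> mc g = C0 -> exists r, In r reps /\ cosetOf D r g) /\
    (forall i j, (i < N)%nat -> (j < N)%nat ->
       cosetOf D (nth i reps M2id) (nth j reps M2id) -> i = j).

Definition termE (D : Z) (Dw : M3 -> Z -> Z -> Cx) (N : nat) (k m : Z)
    (P : H3) (s : Cx) (S : Coset D) : Cx :=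
  let sigma := rep S in
  let g := M2mul sigma (M2mul (nmat (hz P)) (amat (hl P))) in
  Cscale (/ INR N)
    (Cmul (Cconj (Dw (Phi (M2inv (Tk g))) k m))
          (Cpow_pos (hl (mob sigma P)) (Cadd C1 s))).
Definition termH (D : Z) (Dw : M3 -> Z -> Z -> Cx) (N : nat) (k m : Z)
    (P : H3) (s : Cx) (S : Coset D) : Cx :=
  let sigma := rep S in
  Cscale (/ INR N)
    (Cmul (Cconj (Dw (M3inv (Rdsig sigma P)) k m))
          (Cpow_pos (hl (mob sigma P)) (Cadd C1 s))).

(* Main.v *)
Require Import Defs.
From Stdlib Require Import Reals ZArith Lra Lia Nsatz FunctionalExtensionality ClassicalEpsilon.
From Coquelicot Require Import Coquelicot.
Import Defs.
Open Scope R_scope.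
Lemma Cx_eq (z w : Cx) : fst z = fst w -> snd z = snd w -> z = w.
Proof. destruct z, w; simpl; intros; subst; reflexivity. Qed.
Definition quat (al be : Cx) : M2 := mkM2 al be (Copp (Cconj be)) (Cconj al).
Definition msg (i : i3) : R := match i with X3 => 1 | _ => -1 end.
Definition Psi (p q r s : R) : M3 := Phi (quat (p,q) (r,s)).

Ltac cbvall := cbv beta iota zeta delta [Psi Phi Xh Xh_inv quat M2mul M2adj msg delta i3_eqb
  Cnorm2 Cadd Cmul Cscale Cconj Copp RtoC ma mb mc md fst snd M3mul M3cof M3det nx M3inv].

Lemma Psi_T p q r s i j : Phi (quat (p,-q) (-r,-s)) i j = Psi p q r s j i.
Proof. destruct i, j; cbvall; ring. Qed.

Lemma Psi_orth p q r s i j :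
  M3mul (fun a b => Psi p q r s b a) (Psi p q r s) i j = (p^2+q^2+r^2+s^2)^2 * delta i j.
Proof. destruct i, j; cbvall; ring. Qed.
Lemma Psi_det p q r s : M3det (Psi p q r s) = (p^2+q^2+r^2+s^2)^3.
Proof. cbvall; ring. Qed.
Lemma Psi_cof p q r s i j : M3cof (Psi p q r s) i j = (p^2+q^2+r^2+s^2) * Psi p q r s i j.
Proof. destruct i, j; cbvall; ring. Qed.

Definition Psim p q r s : M3 := fun i j => msg i * msg j * Psi p q r s i j.
Lemma Psim_orth p q r s i j :
  M3mul (fun a b => Psim p q r s b a) (Psim p q r s) i j = (p^2+q^2+r^2+s^2)^2 * delta i j.
Proof. unfold Psim; destruct i, j; cbvall; ring. Qed.
Lemma Psim_det p q r s : M3det (Psim p q r s) = (p^2+q^2+r^2+s^2)^3.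
Proof. unfold Psim; cbvall; ring. Qed.
Lemma Psim_cof p q r s i j : M3cof (Psim p q r s) i j = (p^2+q^2+r^2+s^2) * Psim p q r s i j.
Proof. unfold Psim; destruct i, j; cbvall; ring. Qed.

Lemma so3_scale (X : M3) (N : R) : N <> 0 ->
  (forall i j, M3mul (fun a b => X b a) X i j = N^2 * delta i j) ->
  M3det X = N^3 -> (forall i j, M3cof X i j = N * X i j) ->
  isSO3 (fun i j => X i j / N) /\ (forall i j, M3inv (fun i j => X i j / N) i j = X j i / N).
Proof.
  intros HN Ho Hd Hc. split; [split|].
  - intros i j. rewrite <- (Rmult_1_l (delta i j)). replace 1 with (N^2/N^2) by (field; auto).
    unfold Rdiv. rewrite Rmult_assoc, (Rmult_comm (/ N^2)), <- Rmult_assoc.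
    rewrite <- (Ho i j). unfold M3mul. field; auto.
  - replace 1 with (M3det X / N^3) by (rewrite Hd; field; auto).
    unfold M3det, M3cof; field; auto.
  - intros i j. unfold M3inv.
    replace (M3det (fun i0 j0 => X i0 j0 / N)) with (M3det X / N^3) by (unfold M3det, M3cof; field; auto).
    replace (M3cof (fun i0 j0 => X i0 j0 / N) j i) with (M3cof X j i / N^2) by (unfold M3cof; field; auto).
    rewrite Hd, Hc. field; auto.
Qed.

Definition Lraw (g : M2) (P : H3) : M3 :=
  let u := Cadd (Cmul (mc g) (hz P)) (md g) in
  let den := Cnorm2 u + Cnorm2 (mc g) * hl P ^ 2 in
  fun i j => msg i * msg j * Phi (quat (Cconj u) (Copp (Cscale (hl P) (Cconj (mc g))))) i j / den ^ 2.
Definition Ldet (g : M2) (P : H3) : M3 :=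
  let dt := M2det g in
  fun i j => match i with
   | X1 => fst dt * Lraw g P X1 j - snd dt * Lraw g P X2 j
   | X2 => fst dt * Lraw g P X2 j + snd dt * Lraw g P X1 j
   | X3 => Lraw g P X3 j end.
Definition dens (g : M2) (P : H3) : R :=
  Cnorm2 (Cadd (Cmul (mc g) (hz P)) (md g)) + Cnorm2 (mc g) * hl P ^ 2.

Lemma jac_raw (g : M2) (P : H3) : dens g P <> 0 ->
  IsJac (mobR3 g) (toR3 P) (Ldet g P).
Proof.
destruct g as [[a1 a2] [b1 b2] [c1 c2] [d1 d2]]. destruct P as [[x y] l].
unfold dens; cbv beta iota zeta delta [Cnorm2 Cadd Cmul hz hl mc md fst snd].
intros Hd i j. apply is_derive_Reals.
destruct i, j;
cbv beta iota zeta delta [Ldet M2det Csub Lraw Phi Xh Xh_inv quat M2mul M2adj msg mobR3 mob toR3 ofR3 delta i3_eqb Cnorm2 Cadd Cmul Cscale Cconj Copp RtoC hz hl ma mb mc md fst snd];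
auto_derive; repeat split; try (intro HH; apply Hd; rewrite <- HH; ring);
field; (intro HH; apply Hd; rewrite <- HH; ring).
Qed.

Lemma jac_eq' (g : M2) (P : H3) : dens g P <> 0 -> jac (mobR3 g) (toR3 P) = Ldet g P.
Proof.
  intro Hd. pose proof (jac_raw g P Hd) as HJ.
  unfold jac. pose proof (epsilon_spec (inhabits M3zero) (IsJac (mobR3 g) (toR3 P)) (ex_intro _ _ HJ)) as H.
  extensionality i. extensionality j.
  exact (uniqueness_limite _ _ _ _ (H i j) (HJ i j)).
Qed.

Lemma Rdsig_formula (g : M2) (P : H3) : M2det g = C1 -> 0 < hl P -> dens g P <> 0 ->
  forall i j, Rdsig g P i j =
   Psim (fst (Cadd (Cmul (mc g) (hz P)) (md g))) (- snd (Cadd (Cmul (mc g) (hz P)) (md g)))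
        (- (hl P * fst (mc g))) (hl P * snd (mc g)) i j / dens g P.
Proof.
  intros Hdet Hl Hd i j. unfold Rdsig. rewrite (jac_eq' g P Hd).
  assert (E : Ldet g P i j = Lraw g P i j) by (unfold Ldet; rewrite Hdet; unfold C1; simpl; destruct i; ring).
  rewrite E. revert Hd. unfold dens.
  destruct g as [[a1 a2] [b1 b2] [c1 c2] [d1 d2]]. destruct P as [[x y] l]. simpl in Hl.
  destruct i, j;
  cbv beta iota zeta delta [Psim Psi Ldet M2det Csub Lraw Phi Xh Xh_inv quat M2mul M2adj msg mobR3 mob toR3 ofR3 delta i3_eqb Cnorm2 Cadd Cmul Cscale Cconj Copp RtoC hz hl ma mb mc md fst snd];
  intro Hd; field; split; lra.
Qed.

Lemma iwasawa_exists (g : M2) : M2det g = C1 -> Cnorm2 (mc g) + Cnorm2 (md g) <> 0 ->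
  exists K, IsIwasawaK g K.
Proof.
  destruct g as [[a1 a2] [b1 b2] [c1 c2] [d1 d2]].
  unfold M2det, C1, Csub, Cadd, Copp, Cmul, Cnorm2; simpl. intros Hdet Hr.
  injection Hdet; intros Hd2' Hd1'. clear Hdet.
  assert (Hd1 : a1*d1 - a2*d2 - (b1*c1 - b2*c2) = 1) by lra.
  assert (Hd2 : a1*d2 + a2*d1 - (b1*c2 + b2*c1) = 0) by lra. clear Hd1' Hd2'.
  assert (Hr0 : 0 < c1*c1+c2*c2 + (d1*d1+d2*d2)).
  { assert (0 <= c1*c1+c2*c2) by nra. assert (0 <= d1*d1+d2*d2) by nra. lra. }
  clear Hr.
  assert (Hsr : sqrt (c1*c1+c2*c2 + (d1*d1+d2*d2)) * sqrt (c1*c1+c2*c2 + (d1*d1+d2*d2)) = c1*c1+c2*c2 + (d1*d1+d2*d2)) by (apply sqrt_sqrt; lra).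
  assert (Hsp : 0 < sqrt (c1*c1+c2*c2 + (d1*d1+d2*d2))) by (apply sqrt_lt_R0; lra).
  assert (Hrr : sqrt (/ (c1*c1+c2*c2 + (d1*d1+d2*d2))) = / sqrt (c1*c1+c2*c2 + (d1*d1+d2*d2))) by (apply sqrt_inv).
  set (sr := sqrt (c1*c1+c2*c2 + (d1*d1+d2*d2))) in *.
  assert (Hsi : / sr * sr = 1) by (field; lra).
  assert (Hsi2 : / sr * / sr * (c1*c1+c2*c2 + (d1*d1+d2*d2)) = 1) by (rewrite <- Hsr; field; lra).
  assert (Hisi : / / sr = sr) by (field; lra).
  set (si := / sr) in *. clearbody si sr. clear Hsp. move Hr0 at top.
  exists (mkM2 (si*d1, -(si*d2)) (-(si*c1), si*c2) (si*c1, si*c2) (si*d1, si*d2)).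
  split; [split|].
  - clear Hrr Hisi. apply Cx_eq; cbv beta iota zeta delta [M2det Csub Cadd Cmul Copp C1 fst snd ma mb mc md]; nsatz.
  - clear Hrr Hisi. unfold M2mul, M2adj, M2id; f_equal; apply Cx_eq;
    cbv beta iota zeta delta [Cconj C0 C1 Cadd Cmul Copp fst snd ma mb mc md]; nsatz.
  - exists (Cscale (si*si) (Cadd (Cmul (a1,a2) (Cconj (c1,c2))) (Cmul (b1,b2) (Cconj (d1,d2))))), (/ (c1*c1+c2*c2 + (d1*d1+d2*d2))).
    split; [apply Rinv_0_lt_compat; lra|].
    unfold amat. rewrite Hrr, Hisi. clear Hrr Hisi.
    unfold M2mul, nmat; f_equal; apply Cx_eq;
    cbv beta iota zeta delta [RtoC Cscale Cconj C0 C1 Cadd Cmul Copp fst snd ma mb mc md]; nsatz.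
Qed.

Lemma SU2_struct (a1 a2 b1 b2 c1 c2 d1 d2 : R) :
  inSU2 (mkM2 (a1,a2) (b1,b2) (c1,c2) (d1,d2)) ->
  a1 = d1 /\ a2 = - d2 /\ b1 = - c1 /\ b2 = c2 /\ c1*c1+c2*c2+d1*d1+d2*d2 = 1.
Proof.
  intros [Hdet Hu].
  unfold M2det, C1, Csub, Cadd, Copp, Cmul in Hdet; simpl in Hdet. injection Hdet; intros Hd2' Hd1'. clear Hdet.
  unfold M2mul, M2adj, M2id, Cadd, Cmul, Cconj, C0, C1 in Hu; simpl in Hu.
  injection Hu; intros H22b H22a H21b H21a H12b H12a H11b H11a. clear Hu.
  assert (E1 : a1*d1 - a2*d2 - (b1*c1 - b2*c2) = 1) by lra.
  assert (E2 : a1*d2 + a2*d1 - (b1*c2 + b2*c1) = 0) by lra.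
  assert (E3 : a1*a1+a2*a2+b1*b1+b2*b2 = 1) by lra.
  assert (E4 : c1*c1+c2*c2+d1*d1+d2*d2 = 1) by lra.
  assert (E5 : a1*c1+a2*c2+b1*d1+b2*d2 = 0) by lra.
  assert (E6 : a2*c1-a1*c2+b2*d1-b1*d2 = 0) by lra.
  clear Hd2' Hd1' H22b H22a H21b H21a H12b H12a H11b H11a.
  repeat split; [nsatz|nsatz|nsatz|nsatz|exact E4].
Qed.

Lemma Phi_M2inv_quat (p q r s : R) (i j : i3) : p*p+q*q+r*r+s*s <> 0 ->
  Phi (M2inv (mkM2 (p,q) (r,s) (-r,s) (p,-q))) i j * (p*p+q*q+r*r+s*s)^2 = Phi (quat (p,-q) (-r,-s)) i j.
Proof.
  intro HD. destruct i, j;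
  cbv beta iota zeta delta [M2inv M2det Cdiv Cinv Csub Phi Xh Xh_inv quat M2mul M2adj delta i3_eqb
  Cnorm2 Cadd Cmul Cscale Cconj Copp RtoC ma mb mc md fst snd];
  field; intro HH; apply HD; nra.
Qed.

Lemma Phi_M2inv_K (c1 c2 d1 d2 : R) (i j : i3) : c1*c1+c2*c2+d1*d1+d2*d2 <> 0 ->
  Phi (M2inv (mkM2 (d1,-d2) (-c1,c2) (c1,c2) (d1,d2))) i j * (c1*c1+c2*c2+d1*d1+d2*d2)^2
  = Phi (quat (d1,d2) (c1,-c2)) i j.
Proof.
  intro HD. destruct i, j;
  cbv beta iota zeta delta [M2inv M2det Cdiv Cinv Csub Phi Xh Xh_inv quat M2mul M2adj delta i3_eqb
  Cnorm2 Cadd Cmul Cscale Cconj Copp RtoC ma mb mc md fst snd];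
  field; intro HH; apply HD; nra.
Qed.

Lemma iwasawa_phi (g K : M2) : IsIwasawaK g K -> forall i j,
  Phi (M2inv K) i j = Phi (quat (md g) (Cconj (mc g))) i j / (Cnorm2 (mc g) + Cnorm2 (md g)).
Proof.
  intros [HS [w [mu [Hmu Hg]]]] i j.
  destruct K as [[ka1 ka2] [kb1 kb2] [kc1 kc2] [kd1 kd2]].
  destruct (SU2_struct _ _ _ _ _ _ _ _ HS) as (E1&E2&E3&E4&Hn). subst ka1 ka2 kb1 kb2.
  assert (L1 := Phi_M2inv_K kc1 kc2 kd1 kd2 i j). rewrite Hn, pow1, Rmult_1_r in L1.
  rewrite L1 by lra. clear L1. subst g.
  assert (Hs : 0 < sqrt mu) by (apply sqrt_lt_R0; lra).
  unfold amat. set (s := sqrt mu) in *. clearbody s.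
  transitivity (Phi (quat (kd1, kd2) (kc1, - kc2)) i j / (kc1 * kc1 + kc2 * kc2 + kd1 * kd1 + kd2 * kd2)).
  { rewrite Hn. field. }
  assert (HN : kc1 * kc1 + kc2 * kc2 + kd1 * kd1 + kd2 * kd2 <> 0) by lra. clear Hn HS.
  destruct i, j;
  cbv beta iota zeta delta [M2inv M2det Cdiv Cinv Csub Phi Xh Xh_inv quat M2mul M2adj delta i3_eqb
  Cnorm2 Cadd Cmul Cscale Cconj Copp RtoC ma mb mc md fst snd nmat amat C0 C1];
  field; repeat split; try lra; intro HH; apply HN; nra.
Qed.

Lemma M2det_mul (X Y : M2) : M2det (M2mul X Y) = Cmul (M2det X) (M2det Y).
Proof.
  destruct X as [[a1 a2] [b1 b2] [c1 c2] [d1 d2]], Y as [[e1 e2] [f1 f2] [g1 g2] [h1 h2]].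
  apply Cx_eq; cbv beta iota zeta delta [M2det M2mul Csub Cadd Cmul Copp fst snd ma mb mc md]; ring.
Qed.

Lemma sq0 (a : R) : a * a = 0 -> a = 0.
Proof. intro H. destruct (Rmult_integral _ _ H); auto. Qed.
Lemma sq4 (a b c d : R) : a*a+b*b+c*c+d*d = 0 -> a = 0 /\ b = 0 /\ c = 0 /\ d = 0.
Proof.
  intro H. pose proof (Rle_0_sqr a). pose proof (Rle_0_sqr b). pose proof (Rle_0_sqr c). pose proof (Rle_0_sqr d).
  unfold Rsqr in *. repeat split; apply sq0; lra.
Qed.

Lemma det1_rnz (g : M2) : M2det g = C1 -> Cnorm2 (mc g) + Cnorm2 (md g) <> 0.
Proof.
  destruct g as [[a1 a2] [b1 b2] [c1 c2] [d1 d2]].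
  unfold M2det, C1, Csub, Cadd, Copp, Cmul, Cnorm2; simpl. intros H HH.
  injection H; intros H2 H1.
  destruct (sq4 c1 c2 d1 d2) as (?&?&?&?); [lra|]. subst. lra.
Qed.

Lemma dens_nz (g : M2) (P : H3) : M2det g = C1 -> 0 < hl P -> dens g P <> 0.
Proof.
  destruct g as [[a1 a2] [b1 b2] [c1 c2] [d1 d2]], P as [[x y] l].
  unfold dens, M2det, C1, Csub, Cadd, Copp, Cmul, Cnorm2; simpl. intros H Hl HH.
  injection H; intros H2 H1.
  assert (Hc : (c1*c1+c2*c2)*(l*l) = 0).
  { pose proof (Rle_0_sqr (c1*x - c2*y + d1)). pose proof (Rle_0_sqr (c1*y + c2*x + d2)).
    assert (0 <= (c1*c1+c2*c2)*(l*l)) by (apply Rmult_le_pos; nra). unfold Rsqr in *. lra. }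
  apply Rmult_integral in Hc. destruct Hc as [Hc|Hc]; [|apply sq0 in Hc; lra].
  destruct (sq4 c1 c2 0 0) as (?&?&_&_); [lra|]. subst.
  destruct (sq4 d1 d2 0 0) as (?&?&_&_); [lra|]. subst. lra.
Qed.

Definition gIw (g : M2) (P : H3) : M2 := M2mul g (M2mul (nmat (hz P)) (amat (hl P))).

Lemma gIw_det (g : M2) (P : H3) : M2det g = C1 -> 0 < hl P -> M2det (gIw g P) = C1.
Proof.
  intros Hd Hl. unfold gIw. rewrite !M2det_mul, Hd.
  assert (Hs : 0 < sqrt (hl P)) by (apply sqrt_lt_R0; lra).
  unfold nmat, amat. apply Cx_eq; cbv beta iota zeta delta [M2det Csub Cadd Cmul Copp C1 C0 RtoC fst snd ma mb mc md];
  field; lra.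
Qed.

Lemma B_formula (g : M2) (P : H3) : 0 < hl P -> dens g P <> 0 -> forall i j,
  Phi (quat (md (gIw g P)) (Cconj (mc (gIw g P)))) i j / (Cnorm2 (mc (gIw g P)) + Cnorm2 (md (gIw g P)))
  = Psi (fst (Cadd (Cmul (mc g) (hz P)) (md g))) (- - snd (Cadd (Cmul (mc g) (hz P)) (md g)))
        (- - (hl P * fst (mc g))) (- (hl P * snd (mc g))) i j / dens g P.
Proof.
  intros Hl Hd i j.
  destruct g as [[a1 a2] [b1 b2] [c1 c2] [d1 d2]], P as [[x y] l]. simpl in Hl.
  assert (Hs : 0 < sqrt l) by (apply sqrt_lt_R0; lra).
  assert (Hl2 : l = sqrt l * sqrt l) by (rewrite sqrt_sqrt; lra).
  unfold gIw, amat. revert Hd. simpl hl. set (sl := sqrt l) in *. clearbody sl. subst l.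
  unfold dens.
  destruct i, j;
  cbv beta iota zeta delta [M2inv M2det Cdiv Cinv Csub Psi Phi Xh Xh_inv quat M2mul M2adj delta i3_eqb
  Cnorm2 Cadd Cmul Cscale Cconj Copp RtoC ma mb mc md fst snd nmat amat C0 C1 hz hl]; intro Hd;
  field; repeat split; try lra; try exact Hd; intro HH; apply Hd; rewrite <- HH; field; lra.
Qed.

Lemma Csum_n_ext (f g : nat -> Cx) (n : nat) : (forall i, (i < n)%nat -> f i = g i) -> Csum_n f n = Csum_n g n.
Proof.
  induction n; simpl; intros H; auto. rewrite IHn by (intros; apply H; lia). rewrite H by lia. reflexivity.
Qed.
Lemma Csum_n_sub (f g : nat -> Cx) (n : nat) :
  Csum_n (fun i => Csub (f i) (g i)) n = Csub (Csum_n f n) (Csum_n g n).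
Proof.
  induction n; simpl. apply Cx_eq; unfold Csub, Cadd, Copp, C0; simpl; ring.
  rewrite IHn. apply Cx_eq; unfold Csub, Cadd, Copp; simpl; ring.
Qed.
Lemma Csum_n_scale (r : R) (f : nat -> Cx) (n : nat) :
  Csum_n (fun i => Cscale r (f i)) n = Cscale r (Csum_n f n).
Proof.
  induction n; simpl. apply Cx_eq; unfold Cscale, C0; simpl; ring.
  rewrite IHn. apply Cx_eq; unfold Cscale, Cadd; simpl; ring.
Qed.


Definition sg (k : Z) : R := cos (IZR k * PI).
Definition Mzv (p : R3) : R3 := fun i => msg i * p i.

Lemma cos_INR_PI (n : nat) : cos (INR n * PI) = (-1)^n.
Proof.
  induction n. simpl. rewrite Rmult_0_l, cos_0. reflexivity.
  rewrite S_INR, Rmult_plus_distr_r, Rmult_1_l, neg_cos, IHn. simpl. ring.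
Qed.

Lemma sg_pos (k : Z) : (0 <= k)%Z -> cos (IZR k * PI) = (-1)^(Z.to_nat k).
Proof. intro H. rewrite <- (Z2Nat.id k) at 1 by lia. rewrite <- INR_IZR_INZ. apply cos_INR_PI. Qed.
Lemma sg_neg (k : Z) : (k < 0)%Z -> cos (IZR k * PI) = (-1)^(Z.to_nat (- k)).
Proof.
  intro H. replace (IZR k) with (- IZR (- k)) by (rewrite opp_IZR; ring).
  rewrite Ropp_mult_distr_l_reverse, cos_neg. apply sg_pos. lia.
Qed.

Lemma Cpow_neg (p1 p2 : R) (n : nat) : Cpow (-1 * p1, -1 * p2) n = Cscale ((-1)^n) (Cpow (p1, p2) n).
Proof.
  induction n; simpl. apply Cx_eq; unfold Cscale, C1; simpl; ring.
  rewrite IHn. destruct (Cpow (p1,p2) n) as [x y]. apply Cx_eq; unfold Cscale, Cmul; simpl; ring.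
Qed.

Lemma Ypos_msg (l n : nat) (p : R3) : Ypos l n (Mzv p) = Cscale ((-1)^n) (Ypos l n p).
Proof.
  unfold Ypos, Mzv. simpl msg. rewrite Rmult_1_l, Cpow_neg.
  destruct (Cpow (p X1, p X2) n) as [x y]. apply Cx_eq; unfold Cscale; simpl; ring.
Qed.

Lemma Ylm_msg (l : nat) (k : Z) (p : R3) : Ylm l k (Mzv p) = Cscale (sg k) (Ylm l k p).
Proof.
  unfold Ylm, sg. destruct (0 <=? k)%Z eqn:E.
  - apply Z.leb_le in E. rewrite Ypos_msg, sg_pos by lia. reflexivity.
  - apply Z.leb_gt in E. rewrite Ypos_msg, sg_neg by lia.
    destruct (Ypos l (Z.to_nat (- k)) p) as [x y]. apply Cx_eq; unfold Cscale, Cconj; simpl; ring.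
Qed.

Lemma Cexpi_add (x y : R) : Cexpi (x + y) = Cmul (Cexpi x) (Cexpi y).
Proof. unfold Cexpi, Cmul. rewrite cos_plus, sin_plus. apply Cx_eq; simpl; ring. Qed.

Lemma Csum_n_mulC (z : Cx) (f : nat -> Cx) (n : nat) :
  Csum_n (fun i => Cmul z (f i)) n = Cmul z (Csum_n f n).
Proof.
  induction n; simpl. apply Cx_eq; unfold Cmul, C0; simpl; ring.
  rewrite IHn. apply Cx_eq; unfold Cmul, Cadd; simpl; ring.
Qed.

Lemma Cmul_integral (z w : Cx) : Cmul z w = C0 -> w <> C0 -> z = C0.
Proof.
  destruct z as [a b], w as [c d]. unfold Cmul, C0; simpl. intros H Hw. injection H; intros H2 H1.
  assert (Hn : c*c + d*d <> 0).
  { intro HH. apply Hw. destruct (sq4 c d 0 0) as (->&->&_&_); [lra|reflexivity]. }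
  assert (a * (c*c+d*d) = 0).
  { replace (a * (c*c+d*d)) with (c*(a*c - b*d) + d*(a*d + b*c)) by ring. rewrite H1, H2. ring. }
  assert (b * (c*c+d*d) = 0).
  { replace (b * (c*c+d*d)) with (c*(a*d + b*c) - d*(a*c - b*d)) by ring. rewrite H1, H2. ring. }
  apply Cx_eq; simpl.
  - destruct (Rmult_integral _ _ H0); [auto|contradiction].
  - destruct (Rmult_integral _ _ H3); [auto|contradiction].
Qed.

Lemma Cexpi_neq (x y : R) : 0 < y - x < PI -> Csub (Cexpi x) (Cexpi y) <> C0.
Proof.
  intros H HH. unfold Csub, Cadd, Copp, Cexpi, C0 in HH. injection HH; intros H2 H1.
  assert (Hs : sin (y - x) = 0).
  { unfold Rminus. rewrite sin_plus, sin_neg, cos_neg. replace (cos y) with (cos x) by lra.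
    replace (sin y) with (sin x) by lra. ring. }
  assert (0 < sin (y - x)) by (apply sin_gt_0; lra). lra.
Qed.

Lemma fourier_indep (n : nat) : forall (b : nat -> Cx) (c : R),
  (forall phi, Csum_n (fun i => Cmul (b i) (Cexpi ((INR i + c) * phi))) n = C0) ->
  forall i, (i < n)%nat -> b i = C0.
Proof.
  induction n as [|n IH]; intros b c H i Hi; [lia|].
  set (th := PI / (INR n + 1)).
  assert (Hpos : 0 < INR n + 1) by (pose proof (pos_INR n); lra).
  assert (Hth : 0 < th) by (unfold th; apply Rdiv_lt_0_compat; [exact PI_RGT_0|lra]).
  set (b' := fun i => Cmul (b i) (Csub (Cexpi ((INR i + c) * th)) (Cexpi ((INR n + c) * th)))).
  assert (Hb' : forall phi, Csum_n (fun i => Cmul (b' i) (Cexpi ((INR i + c) * phi))) n = C0).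
  { intro phi.
    assert (E : Csum_n (fun i => Cmul (b' i) (Cexpi ((INR i + c) * phi))) (S n) =
                Csub (Csum_n (fun i => Cmul (b i) (Cexpi ((INR i + c) * (phi + th)))) (S n))
                     (Cmul (Cexpi ((INR n + c) * th)) (Csum_n (fun i => Cmul (b i) (Cexpi ((INR i + c) * phi))) (S n)))).
    { rewrite <- Csum_n_mulC, <- Csum_n_sub. apply Csum_n_ext. intros j _. unfold b'.
      replace ((INR j + c) * (phi + th)) with ((INR j + c) * th + (INR j + c) * phi) by ring.
      rewrite Cexpi_add.
      destruct (b j) as [x1 x2], (Cexpi ((INR j + c) * th)) as [y1 y2], (Cexpi ((INR n + c) * th)) as [z1 z2],
        (Cexpi ((INR j + c) * phi)) as [w1 w2].
      apply Cx_eq; unfold Csub, Cadd, Copp, Cmul; simpl; ring. }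
    rewrite !H in E. simpl Csum_n in E.
    unfold b' at 2 in E.
    destruct (Csum_n (fun i => Cmul (b' i) (Cexpi ((INR i + c) * phi))) n) as [s1 s2].
    destruct (b n) as [x1 x2], (Cexpi ((INR n + c) * th)) as [z1 z2], (Cexpi ((INR n + c) * phi)) as [w1 w2].
    unfold Csub, Cadd, Copp, Cmul, C0 in E |- *; simpl in E |- *.
    injection E; intros. apply Cx_eq; simpl; lra. }
  assert (Hlow : forall j, (j < n)%nat -> b j = C0).
  { intros j Hj. specialize (IH b' c Hb' j Hj). unfold b' in IH.
    apply (Cmul_integral _ _ IH). apply Cexpi_neq.
    assert (Hjn : INR j < INR n) by (apply lt_INR; lia).
    assert (Hj0 : 0 <= INR j) by apply pos_INR.
    replace ((INR n + c) * th - (INR j + c) * th) with ((INR n - INR j) * th) by ring.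
    split; [apply Rmult_lt_0_compat; lra|].
    unfold th. replace ((INR n - INR j) * (PI / (INR n + 1))) with (PI * ((INR n - INR j) / (INR n + 1))) by (field; lra).
    assert ((INR n - INR j) / (INR n + 1) < 1) by (apply (Rmult_lt_reg_r (INR n + 1)); [lra|]; unfold Rdiv; rewrite Rmult_assoc, Rinv_l by lra; lra).
    pose proof PI_RGT_0. nra. }
  destruct (Nat.eq_dec i n) as [->|Hne]; [|apply Hlow; lia].
  specialize (H 0). simpl Csum_n in H.
  rewrite (Csum_n_ext _ (fun _ => C0)) in H.
  - assert (Ez : forall k, Csum_n (fun _ => C0) k = C0).
    { induction k; simpl; auto. rewrite IHk. apply Cx_eq; unfold Cadd, C0; simpl; ring. }
    rewrite Ez, Rmult_0_r in H. unfold Cexpi in H. rewrite cos_0, sin_0 in H.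
    destruct (b n) as [x1 x2]. unfold Cadd, Cmul, C0 in H |- *; simpl in H.
    injection H; intros. apply Cx_eq; simpl; lra.
  - intros j Hj. rewrite Hlow by lia. apply Cx_eq; unfold Cmul, C0; simpl; ring.
Qed.

Lemma sum_single (f : nat -> R) (j0 n : nat) :
  (j0 <= n)%nat -> (forall j, (j <= n)%nat -> j <> j0 -> f j = 0) -> sum_f_R0 f n = f j0.
Proof.
  induction n; intros Hj H.
  - assert (j0 = 0%nat) by lia. subst. reflexivity.
  - simpl. destruct (Nat.eq_dec j0 (S n)) as [->|Hne].
    + rewrite (sum_eq f (fun _ => 0)).
      * assert (Ez : forall k, sum_f_R0 (fun _ => 0) k = 0) by (induction k; simpl; [reflexivity|rewrite IHk; ring]).
        rewrite Ez. ring.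
      * intros i Hi. apply H; lia.
    + rewrite IHn by (try lia; intros; apply H; lia). rewrite (H (S n)) by lia. ring.
Qed.

Lemma cont_sum (F : nat -> R -> R) (x : R) (n : nat) :
  (forall j, continuity_pt (F j) x) -> continuity_pt (fun t => sum_f_R0 (fun j => F j t) n) x.
Proof.
  intro H. induction n.
  - simpl. apply H.
  - simpl. apply (continuity_pt_plus (fun t => sum_f_R0 (fun j => F j t) n) (F (S n))); auto.
Qed.

Lemma cont_mono (c : R) (e : nat) (x : R) : continuity_pt (fun t => c * t ^ e) x.
Proof.
  apply (continuity_pt_mult (fun _ => c) (fun t => t ^ e)).
  - apply continuity_pt_const. intros a b; reflexivity.
  - apply derivable_continuous_pt, derivable_pt_pow.
Qed.

Lemma dLeg_nonzero (l m : nat) : (m <= l)%nat -> exists t, -1 < t < 1 /\ dLeg l m t <> 0.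
Proof.
  intro Hml.
  assert (Hpar : exists j0 e0, (e0 = 0 \/ e0 = 1)%nat /\ (2*j0 = l+m+e0)%nat).
  { destruct (Nat.Even_or_Odd (l+m)) as [[h Hh]|[h Hh]].
    - exists h, 0%nat. split; [left; reflexivity|lia].
    - exists (S h), 1%nat. split; [right; reflexivity|lia]. }
  destruct Hpar as [j0 [e0 [He0 Hj0]]].
  assert (Hj0l : (j0 <= l)%nat).
  { destruct He0; subst; [lia|]. destruct (Nat.eq_dec m l); [subst; lia|lia]. }
  set (coef := fun j : nat => INR (fact l) / (INR (fact j) * INR (fact (l - j))) * (-1)^(l - j)
                 * (INR (fact (2*j)) / INR (fact (2*j - (l+m))))).
  set (h := fun j t => if (l + m <=? 2*j)%nat then coef j * t ^ (2*j - (l+m) - e0) else 0).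
  assert (Hd : forall t, dLeg l m t = t^e0 * sum_f_R0 (fun j => h j t) l).
  { intro t. unfold dLeg. rewrite scal_sum. apply sum_eq. intros j Hj. unfold h.
    destruct (l + m <=? 2*j)%nat eqn:E; [|ring].
    apply Nat.leb_le in E.
    assert (Hp : t^(2*j-(l+m)) = t^e0 * t^(2*j-(l+m)-e0)) by (rewrite <- pow_add; f_equal; destruct He0; subst; lia).
    rewrite Hp. unfold coef. ring. }
  assert (Hh0 : sum_f_R0 (fun j => h j 0) l = coef j0).
  { rewrite (sum_single _ j0 l Hj0l).
    - unfold h. replace (l + m <=? 2*j0)%nat with true by (symmetry; apply Nat.leb_le; lia).
      replace (2*j0 - (l+m) - e0)%nat with 0%nat by lia. simpl. ring.
    - intros j Hj Hne. unfold h. destruct (l + m <=? 2*j)%nat eqn:E; [|reflexivity].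
      apply Nat.leb_le in E. rewrite pow_i; [ring|].
      destruct He0; subst; lia. }
  assert (Hc0 : coef j0 <> 0).
  { unfold coef. pose proof (INR_fact_lt_0 l). pose proof (INR_fact_lt_0 j0). pose proof (INR_fact_lt_0 (l-j0)).
    pose proof (INR_fact_lt_0 (2*j0)). pose proof (INR_fact_lt_0 (2*j0-(l+m))).
    assert ((-1)^(l-j0) <> 0) by (apply pow_nonzero; lra).
    assert (0 < INR (fact j0) * INR (fact (l - j0))) by (apply Rmult_lt_0_compat; auto).
    apply Rmult_integral_contrapositive_currified; [apply Rmult_integral_contrapositive_currified; [|assumption]|].
    - apply Rgt_not_eq, Rdiv_lt_0_compat; auto.
    - apply Rgt_not_eq, Rdiv_lt_0_compat; auto. }
  assert (Hcont : continuity_pt (fun t => sum_f_R0 (fun j => h j t) l) 0).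
  { apply cont_sum. intro j. unfold h. destruct (l + m <=? 2*j)%nat.
    - apply cont_mono.
    - apply continuity_pt_const. intros a b; reflexivity. }
  unfold continuity_pt, continue_in, limit1_in, limit_in in Hcont.
  destruct (Hcont (Rabs (coef j0))) as [del [Hdel Hcl]].
  { apply Rabs_pos_lt. exact Hc0. }
  set (t := Rmin del 1 / 2).
  assert (Ht0 : 0 < t) by (unfold t, Rmin; destruct (Rle_dec del 1); lra).
  assert (Ht1 : t < 1) by (unfold t; pose proof (Rmin_r del 1); lra).
  assert (Htd : t < del) by (unfold t; pose proof (Rmin_l del 1); pose proof (Rmin_r del 1); lra).
  exists t. split; [lra|].
  specialize (Hcl t). simpl in Hcl. unfold R_dist in Hcl. rewrite Hh0 in Hcl.
  assert (Hlt : Rabs (sum_f_R0 (fun j => h j t) l - coef j0) < Rabs (coef j0)).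
  { apply Hcl. split; [split; [exact I|lra]|]. rewrite Rminus_0_r, Rabs_right; lra. }
  rewrite Hd. apply Rmult_integral_contrapositive_currified.
  - apply pow_nonzero; lra.
  - intro HH. rewrite HH, Rminus_0_l, Rabs_Ropp in Hlt. lra.
Qed.

Definition ptp (t phi : R) : R3 := fun i => match i with
  | X1 => sqrt (1 - t^2) * cos phi | X2 => sqrt (1 - t^2) * sin phi | X3 => t end.

Lemma ptp_unit (t phi : R) : -1 < t < 1 -> unitR3 (ptp t phi).
Proof.
  intro H. unfold unitR3, ptp.
  assert (Hs : sqrt (1 - t^2) * sqrt (1 - t^2) = 1 - t^2) by (apply sqrt_sqrt; nra).
  pose proof (sin2_cos2 phi). unfold Rsqr in *.
  replace ((sqrt (1 - t ^ 2) * cos phi) ^ 2 + (sqrt (1 - t ^ 2) * sin phi) ^ 2 + t ^ 2)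
    with ((sqrt (1 - t ^ 2) * sqrt (1 - t ^ 2)) * (sin phi * sin phi + cos phi * cos phi) + t^2) by ring.
  rewrite Hs, H0. ring.
Qed.

Lemma Cpow_polar (rho phi : R) (n : nat) :
  Cpow (rho * cos phi, rho * sin phi) n = Cscale (rho ^ n) (Cexpi (INR n * phi)).
Proof.
  induction n.
  - simpl. unfold Cexpi. rewrite Rmult_0_l, cos_0, sin_0. apply Cx_eq; unfold Cscale, C1; simpl; ring.
  - change (Cpow (rho * cos phi, rho * sin phi) (S n)) with (Cmul (rho * cos phi, rho * sin phi) (Cpow (rho * cos phi, rho * sin phi) n)).
    rewrite IHn, S_INR. cbn [pow]. unfold Cexpi, Cscale, Cmul.
    replace ((INR n + 1) * phi) with (phi + INR n * phi) by ring. rewrite cos_plus, sin_plus.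
    apply Cx_eq; simpl; ring.
Qed.

Definition cY (l n : nat) (t : R) : R :=
  (-1) ^ n * Nlm l n / (2 ^ l * INR (fact l)) * dLeg l n t * sqrt (1 - t^2) ^ n.
Definition Gk (l : nat) (k : Z) (t : R) : R :=
  if (0 <=? k)%Z then cY l (Z.to_nat k) t else (-1) ^ Z.to_nat (- k) * cY l (Z.to_nat (- k)) t.

Lemma Ypos_polar (l n : nat) (t phi : R) : Ypos l n (ptp t phi) = Cscale (cY l n t) (Cexpi (INR n * phi)).
Proof.
  unfold Ypos. simpl ptp. rewrite Cpow_polar. unfold cY.
  destruct (Cexpi (INR n * phi)) as [x y]. apply Cx_eq; unfold Cscale; simpl; ring.
Qed.

Lemma Ylm_polar (l : nat) (k : Z) (t phi : R) : Ylm l k (ptp t phi) = Cscale (Gk l k t) (Cexpi (IZR k * phi)).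
Proof.
  unfold Ylm, Gk. destruct (0 <=? k)%Z eqn:E.
  - apply Z.leb_le in E. rewrite Ypos_polar. rewrite INR_IZR_INZ, Z2Nat.id by lia. reflexivity.
  - apply Z.leb_gt in E. rewrite Ypos_polar. rewrite INR_IZR_INZ, Z2Nat.id by lia.
    replace (IZR k * phi) with (- (IZR (- k) * phi)) by (rewrite opp_IZR; ring).
    unfold Cexpi. rewrite cos_neg, sin_neg. apply Cx_eq; unfold Cscale, Cconj; simpl; ring.
Qed.

Lemma Gk_nonzero (l : nat) (k : Z) : (- Z.of_nat l <= k <= Z.of_nat l)%Z ->
  exists t, -1 < t < 1 /\ Gk l k t <> 0.
Proof.
  intro Hk.
  assert (Hn : forall n, (n <= l)%nat -> exists t, -1 < t < 1 /\ cY l n t <> 0).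
  { intros n Hnl. destruct (dLeg_nonzero l n Hnl) as [t [Ht Hd]]. exists t. split; [exact Ht|].
    unfold cY.
    assert (H1 : (-1)^n <> 0) by (apply pow_nonzero; lra).
    assert (H2 : 0 < Nlm l n).
    { unfold Nlm. apply sqrt_lt_R0. pose proof (INR_fact_lt_0 (l-n)). pose proof (INR_fact_lt_0 (l+n)).
      pose proof PI_RGT_0. pose proof (pos_INR l).
      apply Rmult_lt_0_compat; apply Rdiv_lt_0_compat; lra. }
    assert (H3 : 0 < 2 ^ l * INR (fact l)) by (apply Rmult_lt_0_compat; [apply pow_lt; lra|apply INR_fact_lt_0]).
    assert (H4 : sqrt (1 - t^2) ^ n <> 0) by (apply pow_nonzero, Rgt_not_eq, sqrt_lt_R0; nra).
    unfold Rdiv. repeat apply Rmult_integral_contrapositive_currified; try assumption; try lra.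
    apply Rinv_neq_0_compat; lra. }
  unfold Gk. destruct (0 <=? k)%Z eqn:E.
  - apply Z.leb_le in E. apply Hn. lia.
  - apply Z.leb_gt in E. destruct (Hn (Z.to_nat (- k))) as [t [Ht Hc]]; [lia|].
    exists t. split; [exact Ht|]. apply Rmult_integral_contrapositive_currified; auto.
    apply pow_nonzero; lra.
Qed.

Lemma Ylm_indep (l : nat) (a : nat -> Cx) :
  (forall p, unitR3 p -> Csum_n (fun i => Cmul (a i) (Ylm l (Z.of_nat i - Z.of_nat l) p)) (2*l+1) = C0) ->
  forall i, (i < 2*l+1)%nat -> a i = C0.
Proof.
  intros H i Hi.
  destruct (Gk_nonzero l (Z.of_nat i - Z.of_nat l)) as [t [Ht HG]]; [lia|].
  assert (HF : forall phi, Csum_n (fun j => Cmul (Cscale (Gk l (Z.of_nat j - Z.of_nat l) t) (a j))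
                  (Cexpi ((INR j + - INR l) * phi))) (2*l+1) = C0).
  { intro phi. rewrite <- (H (ptp t phi) (ptp_unit t phi Ht)). apply Csum_n_ext. intros j _.
    rewrite Ylm_polar. rewrite minus_IZR, <- !INR_IZR_INZ.
    replace (INR j + - INR l) with (INR j - INR l) by ring.
    destruct (a j) as [x y], (Cexpi ((INR j - INR l) * phi)) as [z w].
    apply Cx_eq; unfold Cscale, Cmul; simpl; ring. }
  assert (Hb := fourier_indep _ _ _ HF i Hi).
  unfold Cscale, C0 in Hb. injection Hb; intros H2 H1.
  apply Rmult_integral in H1. apply Rmult_integral in H2.
  apply Cx_eq; simpl; destruct H1, H2; try assumption; contradiction.
Qed.



Lemma wigner_sign (l : nat) (Dw : M3 -> Z -> Z -> Cx) (p q r s : R) (k m : Z) :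
  0 < p^2+q^2+r^2+s^2 -> IsWigner l Dw ->
  (- Z.of_nat l <= k <= Z.of_nat l)%Z -> (- Z.of_nat l <= m <= Z.of_nat l)%Z ->
  Dw (fun i j => msg i * msg j * Psi p q r s i j / (p^2+q^2+r^2+s^2)) k m
  = Cscale (sg k * sg m) (Dw (fun i j => Psi p q r s i j / (p^2+q^2+r^2+s^2)) k m).
Proof.
  intros HN HW Hk Hm.
  set (N := p^2+q^2+r^2+s^2) in *.
  destruct (so3_scale (Psi p q r s) N) as [HB HBi];
    [lra|apply Psi_orth|apply Psi_det|apply Psi_cof|].
  destruct (so3_scale (Psim p q r s) N) as [HA HAi];
    [lra|apply Psim_orth|apply Psim_det|apply Psim_cof|].
  unfold Psim in HA, HAi.
  set (A := fun i j => msg i * msg j * Psi p q r s i j / N) in *.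
  set (B := fun i j => Psi p q r s i j / N) in *.
  set (kk := fun i : nat => (Z.of_nat i - Z.of_nat l)%Z).
  assert (Hz : forall p0, unitR3 p0 ->
    Csum_n (fun i => Cmul (Csub (Dw A (kk i) m) (Cscale (sg (kk i) * sg m) (Dw B (kk i) m)))
       (Ylm l (kk i) p0)) (2*l+1) = C0).
  { intros p0 Hp0.
    assert (E1 := HW A HA m Hm p0 Hp0).
    assert (Hp1 : unitR3 (Mzv p0)) by (unfold unitR3, Mzv in *; simpl; lra).
    assert (E2 := HW B HB m Hm (Mzv p0) Hp1).
    assert (E3 : M3mulv (M3inv A) p0 = Mzv (M3mulv (M3inv B) (Mzv p0))).
    { extensionality i. unfold M3mulv, Mzv. rewrite !HAi, !HBi. destruct i; simpl; field; lra. }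
    rewrite E3, Ylm_msg, E2 in E1.
    rewrite <- Csum_n_scale in E1.
    assert (E4 : Csum_n (fun i => Cmul (Csub (Dw A (kk i) m) (Cscale (sg (kk i) * sg m) (Dw B (kk i) m)))
       (Ylm l (kk i) p0)) (2*l+1) =
       Csub (Csum_n (fun i => Cmul (Dw A (kk i) m) (Ylm l (kk i) p0)) (2 * l + 1))
            (Csum_n (fun i => Cscale (sg m) (Cmul (Dw B (kk i) m) (Ylm l (kk i) (Mzv p0)))) (2 * l + 1))).
    { rewrite <- Csum_n_sub. apply Csum_n_ext. intros i _. rewrite Ylm_msg.
      apply Cx_eq; unfold Csub, Cadd, Copp, Cmul, Cscale; simpl; ring. }
    rewrite E4. unfold kk. rewrite <- E1. apply Cx_eq; unfold Csub, Cadd, Copp, C0; simpl; ring. }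
  assert (Hi : (Z.to_nat (k + Z.of_nat l) < 2*l+1)%nat) by lia.
  assert (Hc := Ylm_indep l _ Hz _ Hi).
  unfold kk in Hc. cbv beta in Hc.
  replace (Z.of_nat (Z.to_nat (k + Z.of_nat l)) - Z.of_nat l)%Z with k in Hc by lia.
  destruct (Dw A k m) as [x1 x2], (Dw B k m) as [y1 y2].
  unfold Csub, Cadd, Copp, Cscale, C0 in Hc |- *; simpl in Hc |- *.
  injection Hc; intros. apply Cx_eq; simpl; lra.
Qed.

Lemma Tk_spec (g : M2) : M2det g = C1 -> IsIwasawaK g (Tk g).
Proof.
  intro H. unfold Tk. apply epsilon_spec. apply iwasawa_exists; auto. apply det1_rnz; auto.
Qed.

Lemma geom (g : M2) (P : H3) : M2det g = C1 -> 0 < hl P ->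
  let p := fst (Cadd (Cmul (mc g) (hz P)) (md g)) in
  let q := snd (Cadd (Cmul (mc g) (hz P)) (md g)) in
  let r := hl P * fst (mc g) in
  let s := - (hl P * snd (mc g)) in
  0 < p^2+q^2+r^2+s^2 /\
  M3inv (Rdsig g P) = (fun i j => msg i * msg j * Psi p q r s i j / (p^2+q^2+r^2+s^2)) /\
  Phi (M2inv (Tk (gIw g P))) = (fun i j => Psi p q r s i j / (p^2+q^2+r^2+s^2)).
Proof.
  intros Hd Hl p q r s.
  assert (Hdn := dens_nz g P Hd Hl).
  assert (EN : dens g P = p^2+q^2+r^2+s^2).
  { unfold dens, p, q, r, s, Cnorm2. ring. }
  assert (HN : 0 < p^2+q^2+r^2+s^2).
  { assert (0 <= p^2) by nra. assert (0 <= q^2) by nra. assert (0 <= r^2) by nra. assert (0 <= s^2) by nra.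
    rewrite <- EN in *. lra. }
  split; [exact HN|split].
  - assert (ER : Rdsig g P = fun i j => Psim p (-q) (-r) (-s) i j / (p^2+(-q)^2+(-r)^2+(-s)^2)).
    { extensionality i. extensionality j. rewrite (Rdsig_formula g P Hd Hl Hdn).
      unfold p, q, r, s. rewrite EN. unfold p, q, r, s. rewrite Ropp_involutive. f_equal. ring. }
    destruct (so3_scale (Psim p (-q) (-r) (-s)) (p^2+(-q)^2+(-r)^2+(-s)^2)) as [_ HAi];
      [lra|apply Psim_orth|apply Psim_det|apply Psim_cof|].
    rewrite ER. extensionality i. extensionality j. rewrite HAi. unfold Psim.
    rewrite <- (Psi_T p (-q) (-r) (-s)). rewrite !Ropp_involutive.
    replace ((-q)^2) with (q^2) by ring. replace ((-r)^2) with (r^2) by ring. replace ((-s)^2) with (s^2) by ring.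
    unfold Psi. rewrite (Rmult_comm (msg j)). reflexivity.
  - extensionality i. extensionality j.
    rewrite (iwasawa_phi _ _ (Tk_spec _ (gIw_det g P Hd Hl))).
    rewrite (B_formula g P Hl Hdn). rewrite EN. unfold p, q, r, s. rewrite !Ropp_involutive. reflexivity.
Qed.

Lemma rep_det (D : Z) (S : Coset D) : M2det (rep S) = C1.
Proof.
  destruct S as [S HSp]. unfold rep; simpl. destruct HSp as [s0 [[Hs0 _] HS]].
  assert (Hin : S s0).
  { rewrite HS. exists C0. split.
    - exists 0%Z, 0%Z. apply Cx_eq; unfold Cadd, RtoC, Cscale, C0; simpl; ring.
    - destruct s0 as [[a1 a2] [b1 b2] [c1 c2] [d1 d2]]. unfold M2mul, nmat, C0, C1, Cadd, Cmul; simpl.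
      f_equal; apply Cx_eq; simpl; ring. }
  pose proof (epsilon_spec (inhabits M2id) S (ex_intro _ _ Hin)) as Hr.
  set (t := epsilon (inhabits M2id) S) in *. clearbody t.
  rewrite HS in Hr. destruct Hr as [w [_ Hw]]. rewrite Hw, M2det_mul, Hs0.
  apply Cx_eq; unfold M2det, nmat, Csub, Cadd, Copp, Cmul, C0, C1; simpl; ring.
Qed.

Lemma sin_IZR_PI (k : Z) : sin (IZR k * PI) = 0.
Proof. apply sin_eq_0_1. exists k. reflexivity. Qed.

Lemma Cexpi_sign (k m : Z) : Cexpi (- IZR (k + m) * PI) = (sg k * sg m, 0).
Proof.
  unfold Cexpi, sg. rewrite plus_IZR.
  replace (- (IZR k + IZR m) * PI) with (- (IZR k * PI + IZR m * PI)) by ring.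
  rewrite cos_neg, sin_neg, cos_plus, sin_plus, !sin_IZR_PI. apply Cx_eq; simpl; ring.
Qed.

Lemma Csum_list_scale (c : R) (f : Cx -> Cx) (l : list Cx) :
  Csum_list (map (fun z => Cmul (c, 0) z) l) = Cmul (c, 0) (Csum_list l).
Proof.
  induction l; simpl. apply Cx_eq; unfold Cmul, C0; simpl; ring.
  rewrite IHl. apply Cx_eq; unfold Cmul, Cadd; simpl; ring.
Qed.

Lemma HasSum_scale {I : Type} (f g : I -> Cx) (c : R) (S : Cx) :
  c * c = 1 -> (forall i, g i = Cmul (c, 0) (f i)) -> HasSum f S -> HasSum g (Cmul (c, 0) S).
Proof.
  intros Hc Hg Hf eps Heps. destruct (Hf eps Heps) as [F0 HF0]. exists F0. intros F Hnd Hinc.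
  specialize (HF0 F Hnd Hinc).
  assert (E : map g F = map (fun z => Cmul (c, 0) z) (map f F)).
  { rewrite map_map. apply map_ext. auto. }
  rewrite E, (Csum_list_scale c (fun z => z)).
  set (X := Csum_list (map f F)) in *.
  destruct X as [x1 x2], S as [s1 s2].
  cbv beta iota zeta delta [Cnorm Cnorm2 Csub Cadd Copp Cmul fst snd] in *.
  match goal with |- sqrt ?A < _ => replace A with ((x1 + - s1) ^ 2 + (x2 + - s2) ^ 2) end.
  - exact HF0.
  - transitivity ((c*c)*((x1 + - s1)^2 + (x2 + - s2)^2)); [rewrite Hc; ring | ring].
Qed.

Theorem mainTheorem8 (D : Z) (l : nat) (k m : Z) (s : Cx) (P : H3)
    (Dw : M3 -> Z -> Z -> Cx) (N : nat) (Ev : Cx) :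
  (0 < D)%Z -> squarefree D ->
  (- Z.of_nat l <= k <= Z.of_nat l)%Z -> (- Z.of_nat l <= m <= Z.of_nat l)%Z ->
  1 < fst s -> 0 < hl P ->
  IsWigner l Dw -> IsIndexInf D N ->
  HasSum (termE D Dw N k m P s) Ev ->
  HasSum (termH D Dw N k m P s) (Cmul (Cexpi (- IZR (k + m) * PI)) Ev).
Proof.
  intros _ _ Hk Hm _ Hl HW _ HE.
  rewrite Cexpi_sign. apply (HasSum_scale (termE D Dw N k m P s)); [|intro S|exact HE].
  - unfold sg.
    assert (E1 := sin2_cos2 (IZR k * PI)). assert (E2 := sin2_cos2 (IZR m * PI)).
    rewrite sin_IZR_PI in E1, E2. unfold Rsqr in *.
    replace (cos (IZR k * PI) * cos (IZR m * PI) * (cos (IZR k * PI) * cos (IZR m * PI)))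
      with ((cos (IZR k * PI) * cos (IZR k * PI)) * (cos (IZR m * PI) * cos (IZR m * PI))) by ring.
    replace (cos (IZR k * PI) * cos (IZR k * PI)) with 1 by lra.
    replace (cos (IZR m * PI) * cos (IZR m * PI)) with 1 by lra. ring.
  - unfold termH, termE.
    destruct (geom (rep S) P (rep_det D S) Hl) as [HN [HA HB]].
    unfold gIw in HB. rewrite HA, HB.
    rewrite (wigner_sign l Dw _ _ _ _ k m HN HW Hk Hm).
    set (z := Dw _ k m). set (w := Cpow_pos _ _). destruct z as [z1 z2], w as [w1 w2].
    apply Cx_eq; unfold Cscale, Cmul, Cconj; simpl; ring.
Qed.
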